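(* Let $r\ge2$, $\mathbf z=(z_1,\dots,z_r)^\intercal\in\Omega^r$, and $t\in\mathbb C_\infty$ with $|t|_\infty\le1$. Then \[\sum'_{a_1,\dots,a_r\in A}\frac{a_1(t)}{a_1z_1+\dots+a_rz_r}=\tilde\pi\sum_{0\ne a_1\in A}a_1(t)\,u_{a_1}(\mathbf z).\]
   Context: Let $q$ be a prime power, $A=\mathbb F_q[\theta]$, $|\theta|_\infty=q$, $K_\infty=\mathbb F_q((1/\theta))$, $\mathbb C_\infty$ the completion of an algebraic closure of $K_\infty$; $a(t)$ is $a\in A$ with $\theta$ replaced by $t$. Fix $(-\theta)^{1/(q-1)}$, $\tilde\pi=\theta(-\theta)^{1/(q-1)}\prod_{i\ge1}(1-\theta^{1-q^i})^{-1}$. For an $A$-lattice $\Lambda\subset\mathbb C_\infty$ (free finitely generated discrete $A$-module), $\exp_\Lambda(x)=x\prod_{0\ne\lambda\in\Lambda}(1-x/\lambda)$. $\Omega^r$: vectors $\mathbf z=(z_1,\dots,z_r)^\intercal\in\mathbb C_\infty^r$ with $K_\infty$-linearly independent entries and $z_r=1$; $\tilde{\mathbf z}=(z_2,\dots,z_r)^\intercal$, $\tilde\pi\tilde{\mathbf z}A=A\tilde\pi z_2+\dots+A\tilde\pi z_r$. For $a\in A$, $u_a(\mathbf z)=\exp_{\tilde\pi\tilde{\mathbf z}A}(\tilde\pi az_1)^{-1}$. $\sum'$ excludes $(a_1,\dots,a_r)=(0,\dots,0)$. *)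

(* Defs.v *)
(* C_infinity is modelled abstractly: we quantify over any
   algebraically closed field C with a real absolute value satisfying the
   axioms that characterise C_infinity up to isometric isomorphism. *)
From HB Require Import structures.
From mathcomp Require Import all_boot all_order all_algebra.
From mathcomp Require Import reals.
Set Implicit Arguments. Unset Strict Implicit. Unset Printing Implicit Defensive.
Import Order.TTheory GRing.Theory Num.Theory.
Local Open Scope ring_scope.

Section CinfDefs.
Variables (R : realType) (F : finFieldType) (C : closedFieldType).
Variables (abs : C -> R) (iota : {rmorphism F -> C}) (theta : C).

Definition qF : nat := #|F|.

(* a(x) : the element a of A = F_q[theta] with theta replaced by x *)
Definition evalA (a : {poly F}) (x : C) : C := (map_poly iota a).[x].

Definition polyOf (N : nat) (g : {ffun 'I_N -> F}) : {poly F} := \sum_(i < N) g i *: 'X^i.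

Definition abs_axioms : Prop :=
  (forall x, 0 <= abs x) /\ (forall x, abs x = 0 <-> x = 0) /\
  (forall x y, abs (x * y) = abs x * abs y) /\
  (forall x y, abs (x + y) <= Num.max (abs x) (abs y)).

Definition cvgC (u : nat -> C) (l : C) : Prop :=
  forall eps : R, 0 < eps -> exists N, forall n, (N <= n)%N -> abs (u n - l) < eps.

Definition cauchyC (u : nat -> C) : Prop :=
  forall eps : R, 0 < eps -> exists N, forall m n,
    (N <= m)%N -> (N <= n)%N -> abs (u m - u n) < eps.

Definition completeC : Prop := forall u, cauchyC u -> exists l, cvgC u l.

(* K_infinity: the closure of F_q(theta) in C *)
Definition Kinf (x : C) : Prop :=
  exists a b : nat -> {poly F}, (forall n, b n != 0) /\
    cvgC (fun n => evalA (a n) theta / evalA (b n) theta) x.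

Definition alg_over_Kinf (x : C) : Prop :=
  exists p : {poly C}, p != 0 /\ (forall i, Kinf p`_i) /\ root p x.

Definition is_Cinf : Prop :=
  abs_axioms /\ abs theta = (qF%:R : R) /\ completeC /\
  (forall x (eps : R), 0 < eps -> exists y, alg_over_Kinf y /\ abs (x - y) < eps).

(* Omega^r, with z indexed 0..r-1 (z i = z_{i+1} of the paper) *)
Definition in_Omega (r : nat) (z : nat -> C) : Prop :=
  (forall c : nat -> C, (forall i, (i < r)%N -> Kinf (c i)) ->
     \sum_(i < r) c i * z i = 0 -> forall i, (i < r)%N -> c i = 0) /\
  z r.-1 = 1.

(* partial products defining pi~ = theta xi prod_{i>=1} (1 - theta^(1-q^i))^-1 *)
Definition pi_partial (xi : C) (N : nat) : C :=
  theta * xi * \prod_(1 <= i < N.+1) (1 - (theta ^+ (qF ^ i - 1))^-1)^-1.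

(* partial products of exp_{pi~ z~ A}(pi~ a z_1), over lattice elements
   pi~ (a_2 z_2 + ... + a_r z_r) with deg a_j < N *)
Definition exp_partial (r : nat) (z : nat -> C) (pit : C) (a : {poly F}) (N : nat) : C :=
  let x := pit * evalA a theta * z 0%N in
  x * \prod_(g : {ffun 'I_r.-1 -> {ffun 'I_N -> F}} | g != 0)
        (1 - x / (pit * \sum_(j < r.-1) evalA (polyOf (g j)) theta * z j.+1)).

(* partial sums of the LHS over (a_1,...,a_r) != 0 with deg a_i < N *)
Definition lhs_partial (r : nat) (z : nat -> C) (t : C) (N : nat) : C :=
  \sum_(f : {ffun 'I_r -> {ffun 'I_N -> F}} | f != 0)
     (* numerator a_1(t): the (only) index i with val i = 0 *)
     (\sum_(i < r | val i == 0%N) evalA (polyOf (f i)) t) /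
     (\sum_(i < r) evalA (polyOf (f i)) theta * z i).

(* partial sums of  pi~ * sum_{a_1 != 0} a_1(t) u_{a_1}(z),  deg a_1 < N,
   where E a = exp_{pi~ z~ A}(pi~ a z_1) so u_a(z) = (E a)^-1 *)
Definition rhs_partial (pit : C) (E : {poly F} -> C) (t : C) (N : nat) : C :=
  pit * \sum_(g : {ffun 'I_N -> F} | g != 0) evalA (polyOf g) t * (E (polyOf g))^-1.

End CinfDefs.

(* Main.v *)
Require Import Defs.
From HB Require Import structures.
From mathcomp Require Import all_boot all_order all_algebra.
From mathcomp Require Import reals.
From mathcomp Require Import all_field.
From mathcomp Require Import ring lra zify.
From Stdlib Require Import Classical ClassicalEpsilon.
Import Order.TTheory GRing.Theory Num.Theory.
Local Open Scope ring_scope.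

Set Implicit Arguments. Unset Strict Implicit. Unset Printing Implicit Defensive.

Section AbsBasics.
Variables (R : realType) (C : closedFieldType) (abs : C -> R).
Hypothesis HA : abs_axioms abs.

Lemma abs_ge0 x : 0 <= abs x. Proof. by case: HA. Qed.
Lemma abs_eq0 x : abs x = 0 <-> x = 0. Proof. by case: HA => _ []. Qed.
Lemma absM x y : abs (x * y) = abs x * abs y. Proof. by case: HA => _ [_ []]. Qed.
Lemma abs_ult x y : abs (x + y) <= Num.max (abs x) (abs y).
Proof. by case: HA => _ [_ [_]]. Qed.

Lemma abs0 : abs 0 = 0. Proof. by apply/abs_eq0. Qed.
Lemma abs_neq0 x : x != 0 -> abs x != 0.
Proof. by move=> /eqP nx; apply/eqP => /abs_eq0. Qed.
Lemma abs_gt0 x : x != 0 -> 0 < abs x.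
Proof. by move=> /abs_neq0 h; rewrite lt_def h abs_ge0. Qed.

Lemma abs1 : abs 1 = 1.
Proof.
have h : abs 1 * abs 1 = abs 1 by rewrite -absM mulr1.
have nz : abs 1 != 0 by apply: abs_neq0; exact: oner_neq0.
by apply: (mulIf nz); rewrite h mul1r.
Qed.

Lemma absN1 : abs (-1) = 1.
Proof.
have h : abs (-1) ^+ 2 = 1 by rewrite expr2 -absM mulrNN mulr1 abs1.
by apply/eqP; rewrite -(@pexpr_eq1 _ _ 2) // ?h // abs_ge0.
Qed.

Lemma absN x : abs (- x) = abs x.
Proof. by rewrite -mulN1r absM absN1 mul1r. Qed.

Lemma absB x y : abs (x - y) = abs (y - x).
Proof. by rewrite -absN opprB. Qed.

Lemma absV x : abs (x^-1) = (abs x)^-1.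
Proof.
have [->|nx] := eqVneq x 0; first by rewrite invr0 abs0 invr0.
have : abs x * abs x^-1 = 1 by rewrite -absM mulfV // abs1.
move=> h; rewrite -[LHS]mul1r -(mulVf (abs_neq0 nx)) -mulrA h mulr1 //.
Qed.

Lemma absX x n : abs (x ^+ n) = abs x ^+ n.
Proof. elim: n => [|n IH]; by rewrite ?expr0 ?abs1 // !exprS absM IH. Qed.

Lemma abs_prod (I : Type) (s : seq I) (P : pred I) (f : I -> C) :
  abs (\prod_(i <- s | P i) f i) = \prod_(i <- s | P i) abs (f i).
Proof. by apply: (big_morph abs absM abs1). Qed.

Lemma abs_addB x y : abs (x + y) <= Num.max (abs x) (abs y). Proof. exact: abs_ult. Qed.

Lemma abs_subB x y : abs (x - y) <= Num.max (abs x) (abs y).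
Proof. by rewrite -(absN y) abs_ult. Qed.

Lemma abs_add_le x y B : abs x <= B -> abs y <= B -> abs (x + y) <= B.
Proof. move=> hx hy; apply: le_trans (abs_ult x y) _; by rewrite ge_max hx hy. Qed.
Lemma abs_add_lt x y B : abs x < B -> abs y < B -> abs (x + y) < B.
Proof. move=> hx hy; apply: le_lt_trans (abs_ult x y) _; by rewrite gt_max hx hy. Qed.
Lemma abs_sub_le x y B : abs x <= B -> abs y <= B -> abs (x - y) <= B.
Proof. by move=> hx hy; apply: abs_add_le; rewrite ?absN. Qed.
Lemma abs_sub_lt x y B : abs x < B -> abs y < B -> abs (x - y) < B.
Proof. by move=> hx hy; apply: abs_add_lt; rewrite ?absN. Qed.

Lemma abs_add_dom x y : abs y < abs x -> abs (x + y) = abs x.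
Proof.
move=> hyx; apply/eqP; rewrite eq_le; apply/andP; split.
  by apply: abs_add_le => //; apply: ltW.
have := abs_ult (x + y) (- y); rewrite addrK absN.
rewrite le_max => /orP[//|h]; by move: (le_lt_trans h hyx); rewrite ltxx.
Qed.

Lemma abs_sum_le (I : Type) (s : seq I) (P : pred I) (f : I -> C) B :
  0 <= B -> (forall i, P i -> abs (f i) <= B) -> abs (\sum_(i <- s | P i) f i) <= B.
Proof.
move=> hB hf; apply: (big_ind (fun x => abs x <= B)); first by rewrite abs0.
  by move=> x y; apply: abs_add_le.
exact: hf.
Qed.

Lemma abs_sum_lt (I : Type) (s : seq I) (P : pred I) (f : I -> C) B :
  0 < B -> (forall i, P i -> abs (f i) < B) -> abs (\sum_(i <- s | P i) f i) < B.
Proof.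
move=> hB hf; apply: (big_ind (fun x => abs x < B)); first by rewrite abs0.
  by move=> x y; apply: abs_add_lt.
exact: hf.
Qed.

Lemma abs_small0 x : (forall eps : R, 0 < eps -> abs x < eps) -> x = 0.
Proof.
move=> h; apply/abs_eq0; apply/eqP; rewrite eq_le abs_ge0 andbT.
apply/negP => /negP; rewrite -ltNge => hp.
by have := h _ hp; rewrite ltxx.
Qed.

Lemma dec_le (d : nat -> R) : (forall k, d k.+1 <= d k) -> forall n m, (n <= m)%N -> d m <= d n.
Proof.
move=> hd n; elim=> [|m IH]; first by rewrite leqn0 => /eqP ->.
rewrite leq_eqVlt => /orP[/eqP ->//|h]; exact: le_trans (hd m) (IH h).
Qed.

Lemma tail_bound (u : nat -> C) (d : nat -> R) :
  (forall k, abs (u k.+1 - u k) <= d k) -> (forall k, d k.+1 <= d k) ->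
  forall n m, (n <= m)%N -> abs (u m - u n) <= d n.
Proof.
move=> hu hd n; elim=> [|m IH].
  rewrite leqn0 => /eqP ->; rewrite subrr abs0; apply: le_trans (hu 0%N); exact: abs_ge0.
rewrite leq_eqVlt => /orP[/eqP ->|hnm]; first by rewrite subrr abs0; apply: le_trans (hu m.+1); exact: abs_ge0.
have IH' := IH hnm.
have : u m.+1 - u n = (u m.+1 - u m) + (u m - u n) by rewrite addrA subrK.
move=> ->; apply: abs_add_le => //.
apply: le_trans (hu m) _.
by apply: dec_le => //; apply: ltnW.
Qed.

Lemma cauchy_of_tail (u : nat -> C) (d : nat -> R) :
  (forall k, abs (u k.+1 - u k) <= d k) -> (forall k, d k.+1 <= d k) ->
  (forall eps, 0 < eps -> exists N, d N < eps) -> cauchyC abs u.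
Proof.
move=> hu hd hs eps he; have [N hN] := hs _ he; exists N => m n hm hn.
have h1 := tail_bound hu hd hm; have h2 := tail_bound hu hd hn.
have -> : u m - u n = (u m - u N) - (u n - u N) by rewrite opprB addrA subrK.
apply: abs_sub_lt; exact: le_lt_trans hN.
Qed.

Lemma limit_tail (u : nat -> C) (d : nat -> R) l :
  (forall k, abs (u k.+1 - u k) <= d k) -> (forall k, d k.+1 <= d k) ->
  cvgC abs u l -> forall n, abs (l - u n) <= d n.
Proof.
move=> hu hd hl n; rewrite leNgt; apply/negP => hlt.
have hp : 0 < abs (l - u n) by apply: le_lt_trans hlt; apply: le_trans (hu n); exact: abs_ge0.
have [M hM] := hl _ hp.
have hM' := hM (maxn M n) (leq_maxl _ _).
have ht := tail_bound hu hd (leq_maxr M n).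
have : l - u n = - (u (maxn M n) - l) + (u (maxn M n) - u n) by rewrite opprB addrA subrK.
move=> e; have : abs (l - u n) < abs (l - u n).
  rewrite {1}e; apply: abs_add_lt; first by rewrite absN.
  exact: le_lt_trans ht hlt.
by rewrite ltxx.
Qed.

End AbsBasics.

Lemma choiceN (A : Type) (P : nat -> A -> Prop) :
  (forall n, exists x, P n x) -> exists f : nat -> A, forall n, P n (f n).
Proof.
move=> h; exists (fun n => proj1_sig (constructive_indefinite_description _ (h n))).
move=> n; exact: proj2_sig (constructive_indefinite_description _ (h n)).
Qed.

Lemma choiceT (A B : Type) (P : A -> B -> Prop) :
  (forall a, exists x, P a x) -> exists f : A -> B, forall a, P a (f a).
Proof.
move=> h; exists (fun n => proj1_sig (constructive_indefinite_description _ (h n))).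
move=> n; exact: proj2_sig (constructive_indefinite_description _ (h n)).
Qed.

Lemma ex_uniformN k (P : nat -> nat -> Prop) :
  (forall i, (i < k)%N -> exists N, forall n, (N <= n)%N -> P i n) ->
  exists N, forall n, (N <= n)%N -> forall i, (i < k)%N -> P i n.
Proof.
elim: k => [|k IH] h; first by exists 0%N.
have [N1 h1] := IH (fun i hi => h i (ltnW hi)).
have [N2 h2] := h k (ltnSn k).
exists (maxn N1 N2) => n hn i; rewrite ltnS leq_eqVlt => /orP[/eqP ->|hi].
  by apply: h2; apply: leq_trans hn; apply: leq_maxr.
by apply: h1 => //; apply: leq_trans hn; apply: leq_maxl.
Qed.

Section Cvg.
Variables (R : realType) (C : closedFieldType) (abs : C -> R).
Hypothesis HA : abs_axioms abs.

Lemma inv_small (eps : R) : 0 < eps -> exists N, forall n, (N <= n)%N -> (n.+1%:R)^-1 < eps.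
Proof.
move=> he; exists (Num.Def.archi_bound (eps^-1)) => n hn.
have hpos : 0 <= eps^-1 by rewrite invr_ge0 ltW.
have hb := archi_boundP hpos.
rewrite -[eps]invrK ltf_pV2 ?posrE ?invr_gt0 ?ltr0n //.
apply: lt_le_trans hb _; rewrite ler_nat; exact: leqW.
Qed.

Lemma cvgD (u v : nat -> C) a b : cvgC abs u a -> cvgC abs v b ->
  cvgC abs (fun n => u n + v n) (a + b).
Proof.
move=> hu hv eps he; have [N1 h1] := hu _ he; have [N2 h2] := hv _ he.
exists (maxn N1 N2) => n hn.
have -> : u n + v n - (a + b) = (u n - a) + (v n - b) by rewrite opprD addrACA.
apply: abs_add_lt => //.
  by apply: h1; apply: leq_trans hn; apply: leq_maxl.
by apply: h2; apply: leq_trans hn; apply: leq_maxr.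
Qed.

Lemma cvgC_const a : cvgC abs (fun _ => a) a.
Proof. by move=> eps he; exists 0%N => n _; rewrite subrr abs0. Qed.

Lemma cvgMr (u : nat -> C) a c : cvgC abs u a -> cvgC abs (fun n => u n * c) (a * c).
Proof.
move=> hu eps he.
have [->|nc] := eqVneq c 0.
  by exists 0%N => n _; rewrite !mulr0 subrr abs0.
have hc := abs_gt0 HA nc.
have [N hN] := hu _ (divr_gt0 he hc).
exists N => n hn; rewrite -mulrBl absM //.
by rewrite -ltr_pdivlMr //; apply: hN.
Qed.

Lemma cvg_ext (u v : nat -> C) a : (forall n, u n = v n) -> cvgC abs u a -> cvgC abs v a.
Proof. by move=> e hu eps he; have [N hN] := hu _ he; exists N => n hn; rewrite -e; apply: hN. Qed.

Lemma cvg_sum k (u : nat -> nat -> C) (a : nat -> C) :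
  (forall i, (i < k)%N -> cvgC abs (fun n => u n i) (a i)) ->
  cvgC abs (fun n => \sum_(i < k) u n i) (\sum_(i < k) a i).
Proof.
elim: k => [|k IH] h.
  by move=> eps he; exists 0%N => n _; rewrite !big_ord0 subrr abs0.
rewrite big_ord_recr /=.
apply: (@cvg_ext (fun n => \sum_(i < k) u n i + u n k)).
  by move=> n; rewrite big_ord_recr.
apply: cvgD; last exact: h.
by apply: IH => i hi; apply: h; apply: ltnW.
Qed.

Lemma cvg_unique (u : nat -> C) a b : cvgC abs u a -> cvgC abs u b -> a = b.
Proof.
move=> ha hb; apply/eqP; rewrite -subr_eq0; apply/eqP; apply: (abs_small0 HA) => eps he.
have [N1 h1] := ha _ he; have [N2 h2] := hb _ he.
have -> : a - b = (u (maxn N1 N2) - b) - (u (maxn N1 N2) - a) by ring.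
apply: abs_sub_lt => //; [apply: h2; exact: leq_maxr | apply: h1; exact: leq_maxl].
Qed.

Lemma cvg_abs_eq (u : nat -> C) a (K : R) N0 : cvgC abs u a -> 0 < K ->
  (forall n, (N0 <= n)%N -> abs (u n) = K) -> abs a = K.
Proof.
move=> ha hK hu; have [N hN] := ha _ hK.
have hN' := hN (maxn N N0) (leq_maxl _ _).
have hK' := hu (maxn N N0) (leq_maxr _ _).
have -> : a = u (maxn N N0) - (u (maxn N N0) - a) by ring.
by rewrite abs_add_dom // ?absN // hK'.
Qed.

Lemma cvg_small0 (u : nat -> C) : (forall n, abs (u n) < (n.+1%:R)^-1) -> cvgC abs u 0.
Proof.
move=> hu eps he; have [N hN] := inv_small he; exists N => n hn.
by rewrite subr0; apply: lt_trans (hu n) (hN n hn).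
Qed.

End Cvg.

Section PolyBasics.
Variables (F : finFieldType) (C : closedFieldType) (iota : {rmorphism F -> C}).

Lemma evalA0 x : evalA iota 0 x = 0.
Proof. by rewrite /evalA rmorph0 horner0. Qed.
Lemma evalA1 x : evalA iota 1 x = 1.
Proof. by rewrite /evalA rmorph1 hornerC. Qed.
Lemma evalAD a b x : evalA iota (a + b) x = evalA iota a x + evalA iota b x.
Proof. by rewrite /evalA rmorphD hornerD. Qed.
Lemma evalAN a x : evalA iota (- a) x = - evalA iota a x.
Proof. by rewrite /evalA rmorphN hornerN. Qed.
Lemma evalAB a b x : evalA iota (a - b) x = evalA iota a x - evalA iota b x.
Proof. by rewrite evalAD evalAN. Qed.
Lemma evalAM a b x : evalA iota (a * b) x = evalA iota a x * evalA iota b x.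
Proof. by rewrite /evalA rmorphM hornerM. Qed.
Lemma evalA_sum (I : Type) (s : seq I) (P : pred I) (f : I -> {poly F}) x :
  evalA iota (\sum_(i <- s | P i) f i) x = \sum_(i <- s | P i) evalA iota (f i) x.
Proof. by apply: (big_morph _ (fun a b => evalAD a b x) (evalA0 x)). Qed.

Lemma evalA_coef a x : evalA iota a x = \sum_(i < size a) iota a`_i * x ^+ i.
Proof.
rewrite /evalA horner_coef size_map_poly; apply: eq_bigr => i _; by rewrite coef_map.
Qed.

Lemma coef_polyOf N (g : {ffun 'I_N -> F}) (i : 'I_N) : (polyOf g)`_i = g i.
Proof.
rewrite /polyOf coef_sum (bigD1 i) //= coefZ coefXn eqxx mulr1 big1 ?addr0 //.
move=> j hj; rewrite coefZ coefXn.
case: eqP => [h|]; last by rewrite mulr0.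
by move: hj; rewrite -(inj_eq val_inj) /= h eqxx.
Qed.

Lemma coef_polyOf_ge N (g : {ffun 'I_N -> F}) i : (N <= i)%N -> (polyOf g)`_i = 0.
Proof.
move=> hi; rewrite /polyOf coef_sum big1 // => j _.
rewrite coefZ coefXn; case: eqP => [h|]; last by rewrite mulr0.
by move: (ltn_ord j); rewrite -h ltnNge hi.
Qed.

Lemma size_polyOf N (g : {ffun 'I_N -> F}) : (size (polyOf g) <= N)%N.
Proof.
apply/leq_sizeP => i hi; exact: coef_polyOf_ge.
Qed.

Lemma polyOf_eq0 N (g : {ffun 'I_N -> F}) : polyOf g = 0 -> g = 0.
Proof.
move=> h; apply/ffunP => i; by rewrite -coef_polyOf h coef0 ffunE.
Qed.

Lemma polyOfD N (g h : {ffun 'I_N -> F}) : polyOf (g + h) = polyOf g + polyOf h.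
Proof. by rewrite /polyOf -big_split; apply: eq_bigr => i _; rewrite ffunE scalerDl. Qed.
Lemma polyOf0 N : polyOf (0 : {ffun 'I_N -> F}) = 0.
Proof. by rewrite /polyOf big1 // => i _; rewrite ffunE scale0r. Qed.
Lemma polyOfN N (g : {ffun 'I_N -> F}) : polyOf (- g) = - polyOf g.
Proof.
by apply/eqP; rewrite -subr_eq0 opprK -polyOfD addNr polyOf0.
Qed.

End PolyBasics.

Section AbsPoly.
Variables (R : realType) (F : finFieldType) (C : closedFieldType).
Variables (abs : C -> R) (iota : {rmorphism F -> C}) (theta : C).
Hypothesis HA : abs_axioms abs.
Hypothesis Hth : abs theta = (qF F)%:R.

Lemma qF_gt1 : (1 < qF F)%N.
Proof. exact: card_finNzRing_gt1. Qed.

Definition qR : R := (qF F)%:R.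
Lemma qR_gt1 : 1 < qR.
Proof. by rewrite /qR ltr1n qF_gt1. Qed.
Lemma qR_gt0 : 0 < qR.
Proof. exact: lt_trans ltr01 qR_gt1. Qed.
Lemma qRX_gt0 n : 0 < qR ^+ n.
Proof. exact: exprn_gt0 qR_gt0. Qed.
Lemma qRX_le m n : (m <= n)%N -> qR ^+ m <= qR ^+ n.
Proof. by move=> h; rewrite ler_eXn2l // qR_gt1. Qed.
Lemma qRX_lt m n : (m < n)%N -> qR ^+ m < qR ^+ n.
Proof. move=> h; by rewrite ltr_eXn2l // qR_gt1. Qed.

Lemma abs_iota c : c != 0 -> abs (iota c) = 1.
Proof.
move=> nc.
have hc : c ^+ (qF F).-1 = 1.
  apply: (mulIf nc); rewrite mul1r -exprSr prednK; first exact: expf_card.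
  exact: ltnW qF_gt1.
have : abs (iota c) ^+ (qF F).-1 = 1 by rewrite -absX // -rmorphXn hc rmorph1 abs1.
move/eqP; rewrite pexpr_eq1 ?abs_ge0 //; first by move/eqP.
by rewrite -ltnS prednK ?qF_gt1 //; exact: ltnW qF_gt1.
Qed.

Lemma abs_iota_le c : abs (iota c) <= 1.
Proof.
have [->|nc] := eqVneq c 0; first by rewrite rmorph0 abs0.
by rewrite abs_iota.
Qed.

Lemma evalA_le1 a t : abs t <= 1 -> abs (evalA iota a t) <= 1.
Proof.
move=> ht; rewrite evalA_coef; apply: abs_sum_le => // i _.
rewrite absM // absX //; apply: mulr_ile1; rewrite ?abs_ge0 ?exprn_ge0 ?abs_ge0 //.
  exact: abs_iota_le.
exact: exprn_ile1 (abs_ge0 HA t) ht.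
Qed.

Lemma evalA_theta a : a != 0 -> abs (evalA iota a theta) = qR ^+ (size a).-1.
Proof.
move=> na; rewrite evalA_coef.
have hs : size a = (size a).-1.+1 by rewrite prednK // size_poly_gt0.
move: (lead_coef_eq0 a); rewrite (negbTE na) /lead_coef => hl.
set d := (size a).-1.
have htop : abs (iota a`_d * theta ^+ d) = qR ^+ d.
  by rewrite absM // abs_iota ?hl // mul1r absX // Hth.
rewrite hs big_ord_recr /= addrC abs_add_dom // htop //.
apply: abs_sum_lt => //; first exact: qRX_gt0.
move=> i _; rewrite absM // absX // Hth.
apply: le_lt_trans (_ : 1 * qR ^+ i < _).
  apply: ler_wpM2r; [exact: ltW (qRX_gt0 _)| exact: abs_iota_le].
by rewrite mul1r; apply: qRX_lt.
Qed.

End AbsPoly.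

Section LB.
Variables (R : realType) (F : finFieldType) (C : closedFieldType).
Variables (abs : C -> R) (iota : {rmorphism F -> C}) (theta : C).
Hypothesis HA : abs_axioms abs.
Hypothesis Hth : abs theta = (qF F)%:R.
Hypothesis Hcomp : completeC abs.

Definition isFt x := exists p q : {poly F}, q != 0 /\ x = evalA iota p theta / evalA iota q theta.

Lemma evalA_neq0 a : a != 0 -> evalA iota a theta != 0.
Proof.
move=> na; apply/eqP => h.
have := evalA_theta iota HA Hth na; rewrite h abs0 // => /esym/eqP.
by rewrite (gt_eqF (qRX_gt0 R F _)).
Qed.

Lemma isFt_poly a : isFt (evalA iota a theta).
Proof. by exists a, 1; rewrite oner_neq0 evalA1 divr1. Qed.

Lemma isFt_sub x y : isFt x -> isFt y -> isFt (x - y).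
Proof.
move=> [p [q [nq ->]]] [p' [q' [nq' ->]]].
exists (p * q' - p' * q), (q * q'); split; first by rewrite mulf_neq0.
have h1 := evalA_neq0 nq; have h2 := evalA_neq0 nq'.
rewrite evalAB !evalAM; field.
by rewrite h1 h2.
Qed.

Lemma isFt_div x y : isFt x -> isFt y -> y != 0 -> isFt (x / y).
Proof.
move=> [p [q [nq ->]]] [p' [q' [nq' ey]]] ny.
have np' : p' != 0.
  by apply/eqP => hp; move: ny; rewrite ey hp evalA0 mul0r eqxx.
exists (p * q'), (q * p'); split; first by rewrite mulf_neq0.
have h1 := evalA_neq0 nq; have h2 := evalA_neq0 nq'; have h3 := evalA_neq0 np'.
rewrite ey !evalAM; field.
by rewrite h1 h2 h3.
Qed.

Lemma Kinf_isFt x : isFt x -> Kinf abs iota theta x.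
Proof.
move=> [p [q [nq ->]]]; exists (fun _ => p), (fun _ => q); split => //.
exact: cvgC_const.
Qed.

Lemma Kinf_of_cvg (u : nat -> C) l : (forall n, isFt (u n)) -> cvgC abs u l -> Kinf abs iota theta l.
Proof.
move=> hu hl.
have hex : forall n, exists pq : {poly F} * {poly F}, pq.2 != 0 /\
   u n = evalA iota pq.1 theta / evalA iota pq.2 theta.
  move=> n; have [p [q [nq e]]] := hu n; by exists (p, q).
have [f hf] := choiceN hex.
exists (fun n => (f n).1), (fun n => (f n).2); split; first by move=> n; case: (hf n).
by apply: cvg_ext hl => n; case: (hf n).
Qed.

Variables (r : nat) (z : nat -> C).
Hypothesis Hind : forall c : nat -> C, (forall i, (i < r)%N -> Kinf abs iota theta (c i)) ->
     \sum_(i < r) c i * z i = 0 -> forall i, (i < r)%N -> c i = 0.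

Lemma sum_trunc (c : nat -> C) k : (k < r)%N -> (forall i, (k < i)%N -> c i = 0) ->
  \sum_(i < r) c i * z i = \sum_(i < k.+1) c i * z i.
Proof.
move=> hk hc; rewrite (big_ord_widen _ (fun i => c i * z i) hk).
rewrite [LHS](bigID (fun i : 'I_r => (i < k.+1)%N)) /= [X in _ + X]big1 ?addr0 //.
by move=> i; rewrite -leqNgt => hi; rewrite hc ?mul0r.
Qed.

Lemma Kinf0 : Kinf abs iota theta 0.
Proof. by apply: Kinf_isFt; rewrite -(evalA0 iota theta); apply: isFt_poly. Qed.
Lemma Kinf1 : Kinf abs iota theta 1.
Proof. by apply: Kinf_isFt; rewrite -(evalA1 iota theta); apply: isFt_poly. Qed.

Lemma z_neq0 k : (k < r)%N -> z k != 0.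
Proof.
move=> hk; apply/eqP => hz.
pose c := fun i => if i == k then (1 : C) else 0.
have hc : c k = 0.
  apply: (@Hind c _ _ k hk).
    by move=> i _; rewrite /c; case: (i == k); [exact: Kinf1 | exact: Kinf0].
  rewrite (sum_trunc hk); last by move=> i hi; rewrite /c; case: eqP => // e; move: hi; rewrite e ltnn.
  rewrite big_ord_recr /= hz mulr0 addr0 big1 // => i _.
  by rewrite /c (ltn_eqF (ltn_ord i)) mul0r.
by move: hc; rewrite /c eqxx => /eqP; rewrite oner_eq0.
Qed.

Lemma LBk k : (k <= r)%N -> exists c : R, 0 < c /\ forall b : nat -> C,
   (forall i, (i < k)%N -> isFt (b i)) -> forall j, (j < k)%N ->
   c * abs (b j) <= abs (\sum_(i < k) b i * z i).
Proof.
elim: k => [|k IH] hk.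
  by exists 1; split => // b _ j; rewrite ltn0.
have [ck [hck0 hck]] := IH (ltnW hk).
apply: NNPP => hnot.
have hzk : z k != 0 := z_neq0 hk.
set rho := Num.max 1 (abs (z k) / ck).
have hrho1 : 1 <= rho by rewrite /rho le_max lexx.
have hrho0 : 0 < rho by apply: lt_le_trans ltr01 hrho1.
have hex : forall eta : R, 0 < eta -> exists e : nat -> C,
    (forall i, (i < k)%N -> isFt (e i)) /\ abs (\sum_(i < k) e i * z i + z k) < eta.
  move=> eta heta.
  set del := Num.min ck (eta / rho).
  have hdel : 0 < del by rewrite /del lt_min hck0 divr_gt0.
  have hdck : del <= ck by rewrite /del ge_min lexx.
  have hdeta : del * rho <= eta.
    by rewrite -ler_pdivlMr // /del ge_min lexx orbT.
  have : exists b : nat -> C, (forall i, (i < k.+1)%N -> isFt (b i)) /\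
      exists j, (j < k.+1)%N /\ abs (\sum_(i < k.+1) b i * z i) < del * abs (b j).
    apply: NNPP => hn; apply: hnot; exists del; split => // b hb j hj.
    rewrite leNgt; apply/negP => hlt; apply: hn; exists b; split => //; exists j; by split.
  move=> [b [hb [j [hj hS]]]].
  set S := \sum_(i < k.+1) b i * z i in hS.
  set S' := \sum_(i < k) b i * z i.
  have eS : S = S' + b k * z k by rewrite /S big_ord_recr.
  have key : abs S < del * rho * abs (b k).
    move: hj; rewrite ltnS leq_eqVlt => /orP[/eqP ejk|hjk].
      subst j; apply: (lt_le_trans hS); rewrite -mulrA; apply: ler_wpM2l; first exact: ltW.
      by apply: ler_peMl; rewrite ?abs_ge0.
    have h1 : ck * abs (b j) <= abs S' := hck b (fun i hi => hb i (ltnW hi)) j hjk.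
    have h2 : ck * abs (b j) <= abs (b k) * abs (z k).
      have hS' : S' = S - b k * z k by rewrite eS addrK.
      have := abs_subB HA S (b k * z k); rewrite -hS' => hm.
      move: (le_trans h1 hm); rewrite le_max => /orP[h|]; last by rewrite absM.
      have h3 : del * abs (b j) <= ck * abs (b j) by apply: ler_wpM2r; rewrite ?abs_ge0.
      by have := lt_le_trans (lt_le_trans hS h3) h; rewrite ltxx.
    apply: (lt_le_trans hS).
    rewrite -mulrA; apply: ler_wpM2l; first exact: ltW.
    have h4 : abs (b j) <= abs (z k) / ck * abs (b k).
      by rewrite mulrAC ler_pdivlMr // mulrC [abs (z k) * _]mulrC.
    apply: le_trans h4 _; apply: ler_wpM2r; rewrite ?abs_ge0 //.
    by rewrite /rho le_max lexx orbT.
  have hbk : b k != 0.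
    apply/eqP => h0; move: key; rewrite h0 abs0 // mulr0 ltNge abs_ge0 //.
  exists (fun i => b i / b k); split.
    move=> i hi; apply: isFt_div => //; apply: hb => //; exact: ltnW.
  have -> : \sum_(i < k) b i / b k * z i + z k = S / b k.
    rewrite eS mulrDl mulr_suml; congr (_ + _).
      by apply: eq_bigr => i _; rewrite mulrAC.
    by rewrite mulrAC mulfV // mul1r.
  rewrite absM // absV // ltr_pdivrMr ?abs_gt0 //.
  apply: lt_le_trans key _; apply: ler_wpM2r; rewrite ?abs_ge0 //.
pose P n (e : nat -> C) := (forall i, (i < k)%N -> isFt (e i)) /\
   abs (\sum_(i < k) e i * z i + z k) < (n.+1%:R)^-1.
have hpos : forall n : nat, 0 < (n.+1%:R)^-1 :> R by move=> n; rewrite invr_gt0 ltr0Sn.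
have [e he] := choiceN (P := P) (fun n => hex _ (hpos n)).
set w := fun n => \sum_(i < k) e n i * z i.
have hw : forall n, abs (w n + z k) < (n.+1%:R)^-1 by move=> n; case: (he n).
have hcoef : forall i, (i < k)%N -> cauchyC abs (fun n => e n i).
  move=> i hi eps heps.
  have [N hN] := inv_small (mulr_gt0 hck0 heps).
  exists N => m n hm hn.
  have hFt : forall i', (i' < k)%N -> isFt (e m i' - e n i').
    by move=> i' hi'; apply: isFt_sub; [case: (he m) => h _| case: (he n) => h _]; apply: h.
  have := hck (fun i' => e m i' - e n i') hFt i hi.
  have -> : \sum_(i' < k) (e m i' - e n i') * z i' = (w m + z k) - (w n + z k).
    have -> : w m + z k - (w n + z k) = w m - w n by ring.
    by rewrite /w -sumrB; apply: eq_bigr => i' _; rewrite mulrBl.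
  move=> hle.
  have : ck * abs (e m i - e n i) < ck * eps.
    apply: le_lt_trans hle _; apply: abs_sub_lt => //.
      exact: lt_trans (hw m) (hN m hm).
    exact: lt_trans (hw n) (hN n hn).
  by rewrite ltr_pM2l.
have hexb : forall i, exists x, (i < k)%N -> cvgC abs (fun n => e n i) x.
  move=> i; case hi: (i < k)%N; last by exists 0.
  have [l hl] := Hcomp (hcoef i hi); by exists l.
have [beta hbeta] := choiceN hexb.
have hK : forall i, (i < k)%N -> Kinf abs iota theta (beta i).
  move=> i hi; apply: (Kinf_of_cvg (u := fun n => e n i)); last exact: hbeta.
  by move=> n; case: (he n) => h _; apply: h.
have hsum0 : \sum_(i < k) beta i * z i + z k = 0.
  have c1 : cvgC abs (fun n => w n + z k) (\sum_(i < k) beta i * z i + z k).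
    apply: cvgD => //; last exact: cvgC_const.
    apply: (@cvg_sum _ _ _ HA k (fun n i => e n i * z i) (fun i => beta i * z i)) => i hi.
    by apply: cvgMr => //; apply: hbeta.
  have c2 : cvgC abs (fun n => w n + z k) 0 by apply: cvg_small0.
  exact: cvg_unique c1 c2.
pose c := fun i => if (i < k)%N then beta i else if i == k then (1 : C) else 0.
have hc : c k = 0.
  apply: (@Hind c _ _ k hk).
    move=> i _; rewrite /c; case: ifP => hi; first exact: hK.
    by case: (i == k); [exact: Kinf1 | exact: Kinf0].
  rewrite (sum_trunc hk); last first.
    move=> i hi; rewrite /c ifF; last by apply: negbTE; rewrite -leqNgt ltnW.
    by rewrite ifF //; apply/eqP => e0; move: hi; rewrite e0 ltnn.
  rewrite big_ord_recr /= /c ltnn eqxx mul1r -[RHS]hsum0; congr (_ + _).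
  by apply: eq_bigr => i _; rewrite /= ltn_ord.
by move: hc; rewrite /c ltnn eqxx => /eqP; rewrite oner_eq0.
Qed.

End LB.

Section PFrac.
Variable (K : fieldType).
Variable V : seq K.
Hypothesis Vu : uniq V.
Hypothesis V0 : 0 \in V.
Hypothesis VB : forall a b, a \in V -> b \in V -> a - b \in V.

Lemma VN a : a \in V -> - a \in V.
Proof. by move=> h; rewrite -sub0r VB. Qed.
Lemma VD a b : a \in V -> b \in V -> a + b \in V.
Proof. by move=> ha hb; rewrite -[b]opprK VB // VN. Qed.

Lemma perm_shift mu : mu \in V -> perm_eq [seq v - mu | v <- V] V.
Proof.
move=> hmu; apply: uniq_perm => //.
  by rewrite map_inj_uniq // => a b /addIr.
move=> x; apply/mapP/idP => [[v hv ->]|hx]; first exact: VB.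
by exists (x + mu); rewrite ?addrK // VD.
Qed.

Lemma perm_neg : perm_eq [seq - v | v <- V] V.
Proof.
apply: uniq_perm => //.
  by rewrite map_inj_uniq // => a b /oppr_inj.
move=> x; apply/mapP/idP => [[v hv ->]|hx]; first exact: VN.
by exists (- x); rewrite ?opprK // VN.
Qed.

Definition Dp : {poly K} := \sum_(v <- V) \prod_(w <- V | w != v) ('X - w%:P).

Lemma Dp_horner x : Dp.[x] = \sum_(v <- V) \prod_(w <- V | w != v) (x - w).
Proof.
rewrite /Dp horner_sum; apply: eq_bigr => v _; rewrite horner_prod.
by apply: eq_bigr => w _; rewrite hornerXsubC.
Qed.

Lemma Dp_shift mu : mu \in V -> Dp.[mu] = Dp.[0].
Proof.
move=> hmu; rewrite !Dp_horner.
rewrite -[in RHS](perm_big _ (perm_shift hmu)) big_map.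
apply: eq_bigr => v _.
rewrite -[in RHS](perm_big _ (perm_shift hmu)) big_map.
have e : forall w, (w - mu != v - mu) = (w != v) by move=> w; rewrite (inj_eq (addIr _)).
rewrite (eq_bigl _ _ e); apply: eq_bigr => w _; ring.
Qed.

Lemma size_Dp : (size Dp <= size V)%N.
Proof.
rewrite /Dp big_seq; apply: (big_ind (fun p : {poly K} => (size p <= size V)%N)).
- by rewrite size_poly0.
- by move=> p q hp hq; apply: leq_trans (size_polyD _ _) _; rewrite geq_max hp hq.
move=> v hv; rewrite -big_filter size_prod_XsubC.
have -> : [seq w <- V | w != v] = rem v V by rewrite rem_filter.
by rewrite size_rem // prednK //; move: hv; case: (V).
Qed.

Lemma Dp_const x : Dp.[x] = Dp.[0].
Proof.
set E := Dp - (Dp.[0])%:P.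
suff h : E = 0.
  have : E.[x] = 0 by rewrite h horner0.
  by rewrite /E hornerD hornerN hornerC => /eqP; rewrite subr_eq0 => /eqP.
apply/eqP; apply: contraT => nE.
have hr : all (root E) V.
  by apply/allP => mu hmu; rewrite /root /E hornerD hornerN hornerC Dp_shift // subrr.
have h1 := max_poly_roots nE hr Vu.
have hV : (0 < size V)%N by move: V0; case: (V).
have h2 : (size E <= size V)%N.
  rewrite /E; apply: leq_trans (size_polyD _ _) _; rewrite geq_max size_Dp /=.
  by rewrite size_polyN size_polyC; apply: leq_trans (leq_b1 _) hV.
by move: (leq_trans h1 h2); rewrite ltnn.
Qed.

Lemma pfrac y : y \notin V ->
  y * \prod_(v <- V | v != 0) (1 - y / v) * \sum_(v <- V) (y + v)^-1 = 1.
Proof.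
move=> hy.
have hyw : forall w, w \in V -> y - w != 0.
  by move=> w hw; rewrite subr_eq0; apply: contraNneq hy => ->.
have hy0 : y != 0 by move: (hyw 0 V0); rewrite subr0.
set Kc := \prod_(w <- V | w != 0) (0 - w).
have hK : Dp.[0] = Kc.
  rewrite Dp_horner (bigD1_seq 0) //= [X in _ + X]big1 ?addr0 // => v hv0.
  rewrite -big_filter (bigD1_seq 0) /= ?subrr ?mul0r //; last exact: filter_uniq.
  by rewrite mem_filter eq_sym hv0.
have hKnz : Kc != 0.
  rewrite prodf_seq_neq0; apply/allP => w _; apply/implyP => hw.
  by rewrite sub0r oppr_eq0.
set P := \prod_(w <- V | w != 0) (y - w).
have hP : P != 0.
  rewrite prodf_seq_neq0; apply/allP => w hw; apply/implyP => _; exact: hyw.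
have hQ : \prod_(w <- V) (y - w) = y * P by rewrite (bigD1_seq 0) //= subr0.
have hsum : \sum_(v <- V) (y + v)^-1 = Kc / (y * P).
  rewrite -(perm_big _ perm_neg) big_map.
  have -> : \sum_(v <- V) (y + - v)^-1 = Dp.[y] / (y * P).
    rewrite Dp_horner mulr_suml big_seq [RHS]big_seq; apply: eq_bigr => v hv.
    rewrite -hQ (bigD1_seq v) //=.
    have hnz : \prod_(w <- V | w != v) (y - w) != 0.
      rewrite prodf_seq_neq0; apply/allP => w hw; apply/implyP => _; exact: hyw.
    have := hyw v hv; move: hnz.
    set A := \prod_(w <- V | w != v) (y - w) => hA hv'.
    by field; rewrite hA hv'.
  by rewrite Dp_const hK.
have hprod : \prod_(v <- V | v != 0) (1 - y / v) = P / Kc.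
  rewrite /P /Kc -prodf_div; apply: eq_bigr => v hv.
  by field; rewrite ?sub0r ?oppr_eq0 ?hv.
rewrite hprod hsum; field.
by rewrite hy0 hP hKnz.
Qed.

End PFrac.

Section Box.
Variable F : finFieldType.

Definition extf N (h : {ffun 'I_N -> F}) : {ffun 'I_N.+1 -> F} :=
  [ffun i : 'I_N.+1 => (if @insub _ (fun x => x < N)%N 'I_N (val i) is Some j then h j else 0 : F)].

Lemma coef_polyOf_nat N (g : {ffun 'I_N -> F}) i :
  (polyOf g)`_i = if @insub _ (fun x => x < N)%N 'I_N i is Some j then g j else 0.
Proof.
case: insubP => [j hj <-|hi]; first exact: coef_polyOf.
by rewrite coef_polyOf_ge // leqNgt hi.
Qed.

Lemma polyOf_extf N (h : {ffun 'I_N -> F}) : polyOf (extf h) = polyOf h.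
Proof.
apply/polyP => i; rewrite !coef_polyOf_nat.
case: (@insubP _ (fun x => x < N.+1)%N 'I_N.+1 i) => [j hj ej|hi].
  by rewrite ffunE ej.
case: insubP => // j hj ej; exfalso; move: hi; rewrite -ej.
by rewrite ej ltnS (ltnW hj).
Qed.

Lemma polyOf_inj N : injective (@polyOf F N).
Proof.
move=> g h e; apply/eqP; rewrite -subr_eq0; apply/eqP; apply: polyOf_eq0.
by rewrite polyOfD polyOfN e subrr.
Qed.

Lemma extf_inj N : injective (@extf N).
Proof. by move=> g h e; apply: polyOf_inj; rewrite -polyOf_extf e polyOf_extf. Qed.

Lemma extf0 N : extf (0 : {ffun 'I_N -> F}) = 0.
Proof. by apply: polyOf_inj; rewrite polyOf_extf !polyOf0. Qed.

Variable k : nat.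
Definition extb N (g : {ffun 'I_k -> {ffun 'I_N -> F}}) : {ffun 'I_k -> {ffun 'I_N.+1 -> F}} :=
  [ffun j => extf (g j)].

Lemma extb_inj N : injective (@extb N).
Proof.
move=> g h e; apply/ffunP => j; apply: extf_inj.
by have := congr1 (fun f : {ffun 'I_k -> {ffun 'I_N.+1 -> F}} => f j) e; rewrite /= !ffunE.
Qed.

Lemma extb_eq0 N g : (@extb N g == 0) = (g == 0).
Proof.
apply/eqP/eqP => [e|->]; last by apply/ffunP => j; rewrite !ffunE extf0.
apply: extb_inj; rewrite e; by apply/ffunP => j; rewrite !ffunE extf0.
Qed.

Lemma polyOf_extb N g j : polyOf (@extb N g j) = polyOf (g j).
Proof. by rewrite ffunE polyOf_extf. Qed.

Definition Img N := [set extb x | x in [set: {ffun 'I_k -> {ffun 'I_N -> F}}]].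

Lemma notImg N (g : {ffun 'I_k -> {ffun 'I_N.+1 -> F}}) :
  g \notin Img N -> exists j, g j ord_max != 0.
Proof.
move=> hg; apply/existsP; apply: contraR hg; rewrite negb_exists => /forallP h.
apply/imsetP; exists [ffun j => [ffun i : 'I_N => g j (widen_ord (leqnSn N) i)]] => //.
apply/ffunP => j; apply/ffunP => i; rewrite !ffunE.
case: insubP => [i' hi' ei|hi].
  by rewrite ffunE; congr (g j _); apply: val_inj.
have -> : i = ord_max by apply: val_inj => /=; move: (ltn_ord i) hi; rewrite ltnS /= leq_eqVlt => /orP[/eqP|->].
by have := h j; rewrite negbK => /eqP ->.
Qed.

Lemma big_box_split (T : Type) (idx : T) (op : Monoid.com_law idx) N
   (G : {ffun 'I_k -> {ffun 'I_N.+1 -> F}} -> T) (P : pred {ffun 'I_k -> {ffun 'I_N.+1 -> F}}) :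
  \big[op/idx]_(g | P g) G g =
  op (\big[op/idx]_(g : {ffun 'I_k -> {ffun 'I_N -> F}} | P (extb g)) G (extb g))
     (\big[op/idx]_(g | P g && (g \notin Img N)) G g).
Proof.
rewrite (bigID (fun g => g \in Img N)) /=; congr (op _ _).
rewrite (eq_bigl (fun g => (g \in Img N) && P g)); last by move=> g; rewrite andbC.
rewrite big_imset_cond; last by move=> x y _ _; apply: extb_inj.
by apply: eq_bigl => g; rewrite in_setT.
Qed.

End Box.

Section Cons.
Variables (T : finType) (m : nat).

Definition fcons (h : T) (g : {ffun 'I_m -> T}) : {ffun 'I_m.+1 -> T} :=
  [ffun i => if unlift ord0 i is Some j then g j else h].
Definition ftail (f : {ffun 'I_m.+1 -> T}) : {ffun 'I_m -> T} := [ffun j => f (lift ord0 j)].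

Lemma fcons0 h g : fcons h g ord0 = h.
Proof. by rewrite ffunE unlift_none. Qed.
Lemma fconsS h g j : fcons h g (lift ord0 j) = g j.
Proof. by rewrite ffunE liftK. Qed.

Lemma big_fcons (R : Type) (idx : R) (op : Monoid.com_law idx) (G : {ffun 'I_m.+1 -> T} -> R) :
  \big[op/idx]_f G f = \big[op/idx]_(h : T) \big[op/idx]_(g : {ffun 'I_m -> T}) G (fcons h g).
Proof.
rewrite pair_big /=.
rewrite (reindex (fun p : T * {ffun 'I_m -> T} => fcons p.1 p.2)) //.
exists (fun f : {ffun 'I_m.+1 -> T} => (f ord0, ftail f)).
  move=> [h g] _ /=; rewrite fcons0; congr (_, _); apply/ffunP => j.
  by rewrite ffunE fconsS.
move=> f _ /=; apply/ffunP => i; rewrite ffunE.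
by case: unliftP => [j ->|->]; rewrite ?ffunE.
Qed.

End Cons.

Section Main.
Variables (R : realType) (F : finFieldType) (C : closedFieldType).
Variables (abs : C -> R) (iota : {rmorphism F -> C}) (theta : C).
Hypothesis HA : abs_axioms abs.
Hypothesis Hth : abs theta = (qF F)%:R.
Hypothesis Hcomp : completeC abs.
Variables (m : nat) (z : nat -> C) (c : R).
Hypothesis hc : 0 < c.
Hypothesis HLB : forall b : nat -> {poly F}, forall j, (j < m.+1)%N ->
  c * abs (evalA iota (b j) theta) <= abs (\sum_(i < m.+1) evalA iota (b i) theta * z i).

Local Notation ev a := (evalA iota a theta).
Local Notation box N := {ffun 'I_m -> {ffun 'I_N -> F}}.

Definition lamf N (g : box N) := \sum_(j < m) ev (polyOf (g j)) * z j.+1.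
Definition yv a := ev a * z 0.
Definition sN a N := \sum_(g : box N) (yv a + lamf g)^-1.
Definition Pn a N := yv a * \prod_(g : box N | g != 0) (1 - yv a / lamf g).
Definition dd N := (c * qR R F ^+ N)^-1.

Lemma yv0 : yv 0 = 0.
Proof. by rewrite /yv evalA0 mul0r. Qed.

Lemma lamfD N (g h : box N) : lamf (g + h) = lamf g + lamf h.
Proof.
rewrite /lamf -big_split; apply: eq_bigr => j _.
by rewrite ffunE polyOfD evalAD mulrDl.
Qed.
Lemma lamf0 N : lamf (0 : box N) = 0.
Proof. by rewrite /lamf big1 // => j _; rewrite ffunE polyOf0 evalA0 mul0r. Qed.
Lemma lamfN N (g : box N) : lamf (- g) = - lamf g.
Proof. by apply/eqP; rewrite -subr_eq0 opprK -lamfD addNr lamf0. Qed.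
Lemma lamfB N (g h : box N) : lamf (g - h) = lamf g - lamf h.
Proof. by rewrite lamfD lamfN. Qed.
Lemma lamf_extb N (g : box N) : lamf (extb g) = lamf g.
Proof. by apply: eq_bigr => j _; rewrite polyOf_extb. Qed.

Lemma LBg a N (g : box N) :
  (forall j : 'I_m, c * abs (ev (polyOf (g j))) <= abs (yv a + lamf g)) /\
  c * abs (ev a) <= abs (yv a + lamf g).
Proof.
pose b := fun i => if i is i'.+1 then
   (if @insub _ (fun x => x < m)%N 'I_m i' is Some j then polyOf (g j) else 0) else a.
have eb : \sum_(i < m.+1) ev (b i) * z i = yv a + lamf g.
  rewrite big_ord_recl /=; congr (_ + _); apply: eq_bigr => i _.
  by rewrite /bump /= add0n add1n valK.
split; last by have := HLB b (ltn0Sn m); rewrite eb.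
move=> j; have := HLB b (_ : (j.+1 < m.+1)%N); rewrite eb /b /= valK; apply.
by rewrite ltnS.
Qed.

Lemma LBf N (f : {ffun 'I_m.+1 -> {ffun 'I_N -> F}}) (j : 'I_m.+1) :
  c * abs (ev (polyOf (f j))) <= abs (\sum_(i < m.+1) ev (polyOf (f i)) * z i).
Proof.
pose b := fun i => if @insub _ (fun x => x < m.+1)%N 'I_m.+1 i is Some j then polyOf (f j) else 0.
have := HLB b (ltn_ord j); rewrite /b valK.
by rewrite (eq_bigr (fun i : 'I_m.+1 => ev (polyOf (f i)) * z i)) // => i _; rewrite valK.
Qed.

Lemma ev_ge (p : {poly F}) N : p`_N != 0 -> qR R F ^+ N <= abs (ev p).
Proof.
move=> hN; have np : p != 0 by apply: contraNneq hN => ->; rewrite coef0.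
rewrite (evalA_theta iota HA Hth np); apply: qRX_le.
rewrite -ltnS prednK ?size_poly_gt0 //.
by rewrite ltnNge; apply: contra hN => h; apply/eqP; apply: nth_default.
Qed.

Lemma outside a N (g : {ffun 'I_m -> {ffun 'I_N.+1 -> F}}) :
  g \notin Img F m N -> c * qR R F ^+ N <= abs (yv a + lamf g).
Proof.
move=> /notImg [j hj].
have [h _] := LBg a g; apply: le_trans (h j); apply: ler_wpM2l; first exact: ltW.
by apply: ev_ge; rewrite (coef_polyOf (g j) ord_max).
Qed.

Lemma outsidef N (f : {ffun 'I_m.+1 -> {ffun 'I_N.+1 -> F}}) :
  f \notin Img F m.+1 N -> c * qR R F ^+ N <= abs (\sum_(i < m.+1) ev (polyOf (f i)) * z i).
Proof.
move=> /notImg [j hj].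
apply: le_trans (LBf f j); apply: ler_wpM2l; first exact: ltW.
by apply: ev_ge; rewrite (coef_polyOf (f j) ord_max).
Qed.

Lemma cq_gt0 N : 0 < c * qR R F ^+ N.
Proof. by rewrite mulr_gt0 ?qRX_gt0. Qed.

Lemma dd_gt0 N : 0 < dd N.
Proof. by rewrite invr_gt0 cq_gt0. Qed.

Lemma dd_dec N : dd N.+1 <= dd N.
Proof.
rewrite /dd lef_pV2 ?posrE ?cq_gt0 //; apply: ler_wpM2l; first exact: ltW.
exact: qRX_le.
Qed.

Lemma abs_inv_le x N : c * qR R F ^+ N <= abs x -> abs (x^-1) <= dd N.
Proof.
move=> h; rewrite absV // /dd lef_pV2 ?posrE ?cq_gt0 //.
exact: lt_le_trans (cq_gt0 N) h.
Qed.

Lemma qRX_ge N : N.+1%:R <= qR R F ^+ N.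
Proof.
elim: N => [|N IH]; first by rewrite expr0.
have h2 : 2%:R <= qR R F by rewrite /qR ler_nat qF_gt1.
rewrite exprS; apply: le_trans (_ : 2%:R * N.+1%:R <= _).
  by rewrite -natrM ler_nat mul2n -addnn addSn ltnS leq_addl.
apply: le_trans (_ : qR R F * N.+1%:R <= _).
  by rewrite ler_wpM2r.
by rewrite ler_wpM2l // ltW // qR_gt0.
Qed.

Lemma dd_small eps : 0 < eps -> exists N, dd N < eps.
Proof.
move=> he; have [N hN] := inv_small (mulr_gt0 hc he).
exists N; have h0 := hN N (leqnn N).
have h1 : (qR R F ^+ N)^-1 <= (N.+1%:R)^-1.
  by rewrite lef_pV2 ?posrE ?qRX_gt0 ?ltr0Sn // qRX_ge.
rewrite /dd invfM mulrC.
apply: le_lt_trans (_ : (N.+1%:R)^-1 / c < _).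
  by apply: ler_wpM2r => //; rewrite invr_ge0 ltW.
by rewrite ltr_pdivrMr // mulrC.
Qed.

Lemma sN_step a N : abs (sN a N.+1 - sN a N) <= dd N.
Proof.
rewrite /sN (@big_box_split F m _ _ _ N (fun g => (yv a + lamf g)^-1) predT) /=.
rewrite (eq_bigr (fun g => (yv a + lamf g)^-1)); last by move=> g _; rewrite lamf_extb.
rewrite addrAC subrr add0r; apply: abs_sum_le => //; first exact: ltW (dd_gt0 N).
by move=> g hg; apply: abs_inv_le; apply: outside.
Qed.

Lemma sN_cvg a : exists s, cvgC abs (sN a) s.
Proof.
apply: Hcomp; apply: (cauchy_of_tail HA (d := dd)).
- by move=> k; apply: sN_step.
- exact: dd_dec.
- exact: dd_small.
Qed.

Lemma sN_tail a s : cvgC abs (sN a) s -> forall N, abs (s - sN a N) <= dd N.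
Proof.
move=> hs N; apply: (limit_tail HA (d := dd)) => //.
- by move=> k; apply: sN_step.
- exact: dd_dec.
Qed.

Lemma lamf_eq0 N (g : box N) : lamf g = 0 -> g = 0.
Proof.
move=> e; have [h _] := LBg 0 g; rewrite yv0 add0r e abs0 // in h.
apply/ffunP => j; rewrite ffunE; apply: polyOf_eq0.
apply/eqP; apply: contraT => nj.
have := h j; rewrite pmulr_rle0 // => hle.
have : abs (ev (polyOf (g j))) = 0 by apply/le_anti; rewrite hle abs_ge0.
by move/(abs_eq0 HA)/eqP; rewrite (negbTE (evalA_neq0 iota HA Hth nj)).
Qed.

Lemma lamf_inj N : injective (@lamf N).
Proof.
move=> g h e; apply/eqP; rewrite -subr_eq0; apply/eqP; apply: lamf_eq0.
by rewrite lamfB e subrr.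
Qed.

Lemma y_ne a N (g : box N) : a != 0 -> yv a + lamf g != 0.
Proof.
move=> na; apply/eqP => e; have [_ h] := LBg a g; rewrite e abs0 // pmulr_rle0 // in h.
have : abs (ev a) = 0 by apply/le_anti; rewrite h abs_ge0.
by move/(abs_eq0 HA)/eqP; rewrite (negbTE (evalA_neq0 iota HA Hth na)).
Qed.

Lemma Pn_sN a N : a != 0 -> Pn a N * sN a N = 1.
Proof.
move=> na.
pose V := [seq lamf g | g <- index_enum (box N)].
have Vu : uniq V by rewrite map_inj_uniq ?index_enum_uniq //; exact: lamf_inj.
have V0 : 0 \in V by apply/mapP; exists 0; rewrite ?mem_index_enum ?lamf0.
have VB : forall u v, u \in V -> v \in V -> u - v \in V.
  move=> u v /mapP [g _ ->] /mapP [h _ ->]; apply/mapP; exists (g - h).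
    exact: mem_index_enum.
  by rewrite lamfB.
have hy : yv a \notin V.
  apply/mapP => [[g _ e]]; have := y_ne (- g) na; by rewrite lamfN e subrr eqxx.
have H := pfrac Vu V0 VB hy; rewrite /V !big_map in H.
apply: etrans H; rewrite /Pn /sN; congr (_ * _ * _).
by apply: eq_bigl => g; rewrite -(lamf0 N) (inj_eq (@lamf_inj N)).
Qed.

Lemma Pn_step a N : abs (yv a) < c * qR R F ^+ N -> abs (Pn a N.+1) = abs (Pn a N).
Proof.
move=> hy.
rewrite /Pn (@big_box_split F m _ _ _ N (fun g => 1 - yv a / lamf g) (fun g => g != 0)) /=.
have e1 : \prod_(g : box N | extb g != 0) (1 - yv a / lamf (extb g)) =
    \prod_(g : box N | g != 0) (1 - yv a / lamf g).
  by apply: eq_big => g; rewrite ?extb_eq0 // => _; rewrite lamf_extb.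
rewrite e1.
set P2 := \prod_(g | _ && _) _.
have hP2 : abs P2 = 1.
  rewrite /P2 (abs_prod HA); apply: big1 => g /andP [_ hg].
  have hl := outside 0 hg; rewrite yv0 add0r in hl.
  have hl0 : 0 < abs (lamf g) by apply: lt_le_trans hl; exact: cq_gt0.
  rewrite abs_add_dom // ?abs1 // absN // absM // absV // ltr_pdivrMr // mul1r.
  exact: lt_le_trans hy hl.
by rewrite mulrA absM // hP2 mulr1.

Qed.

Lemma Pn_const a N0 : abs (yv a) < c * qR R F ^+ N0 ->
  forall N, (N0 <= N)%N -> abs (Pn a N) = abs (Pn a N0).
Proof.
move=> hy N hN; rewrite -(subnKC hN); elim: (N - N0)%N => [|k IH]; first by rewrite addn0.
rewrite addnS -IH; apply: Pn_step.
apply: lt_le_trans hy _; apply: ler_wpM2l; [exact: ltW | apply: qRX_le; exact: leq_addr].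
Qed.

Lemma cvg_inv (u : nat -> C) l K N0 : cvgC abs u l -> 0 < K ->
  (forall n, (N0 <= n)%N -> abs (u n) = K) -> abs l = K ->
  cvgC abs (fun n => (u n)^-1) l^-1.
Proof.
move=> hu hK hn hl eps he.
have [N1 h1] := hu _ (mulr_gt0 (mulr_gt0 he hK) hK).
exists (maxn N0 N1) => n hmax.
have hun := hn n (leq_trans (leq_maxl _ _) hmax).
have hu1 := h1 n (leq_trans (leq_maxr _ _) hmax).
have un0 : u n != 0.
  by apply/eqP => e; move: hun; rewrite e abs0 // => hK0; move: hK; rewrite -hK0 ltxx.
have l0 : l != 0.
  by apply/eqP => e; move: hl; rewrite e abs0 // => hK0; move: hK; rewrite -hK0 ltxx.
have -> : (u n)^-1 - l^-1 = (l - u n) / (u n * l) by field; rewrite un0 l0.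
rewrite absM // absV // absM // hun hl (absB HA) ltr_pdivrMr ?mulr_gt0 //.
by rewrite mulrA.
Qed.

Lemma exp_eq pit a N : pit != 0 ->
  exp_partial iota theta m.+1 z pit a N = pit * Pn a N.
Proof.
move=> hp.
have ex : pit * evalA iota a theta * z 0 = pit * yv a by rewrite /yv mulrA.
rewrite /exp_partial ex /Pn -mulrA; congr (_ * (_ * _)).
by apply: eq_bigr => g _; rewrite invfM mulrACA divff // mul1r.
Qed.

Lemma E_cvg pit a s : pit != 0 -> a != 0 -> cvgC abs (sN a) s ->
  s != 0 /\ cvgC abs (exp_partial iota theta m.+1 z pit a) (pit / s).
Proof.
move=> hp na hs.
have hpos : 0 < (abs (yv a) + 1)^-1 by rewrite invr_gt0 ltr_wpDl ?abs_ge0.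
have [N0 hN0] := dd_small hpos.
have hy : abs (yv a) < c * qR R F ^+ N0.
  move: hN0; rewrite /dd ltf_pV2 ?posrE ?cq_gt0 ?ltr_wpDl ?abs_ge0 // => h.
  by apply: lt_trans h; rewrite ltrDl.
have hPs := Pn_sN N0 na.
have hP0 : Pn a N0 != 0 by apply: contra_eq_neq hPs => ->; rewrite mul0r eq_sym oner_eq0.
have hsinv : forall N, sN a N = (Pn a N)^-1.
  move=> N; have h := Pn_sN N na; have hP : Pn a N != 0.
    by apply: contra_eq_neq h => ->; rewrite mul0r eq_sym oner_eq0.
  by rewrite -[sN a N]mul1r -(mulVf hP) -mulrA h mulr1.
have hPinv : forall N, Pn a N = (sN a N)^-1 by move=> N; rewrite hsinv invrK.
set K := (abs (Pn a N0))^-1.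
have hK : 0 < K by rewrite invr_gt0 abs_gt0.
have hsK : forall N, (N0 <= N)%N -> abs (sN a N) = K.
  by move=> N hN; rewrite hsinv absV // (Pn_const hy hN).
have habs : abs s = K := cvg_abs_eq HA hs hK hsK.
have s0 : s != 0.
  by apply/eqP => e; move: habs; rewrite e abs0 // => hK0; move: hK; rewrite -hK0 ltxx.
split => //.
apply: (cvg_ext (u := fun N => (sN a N)^-1 * pit)).
  by move=> N; rewrite exp_eq // hPinv mulrC.
rewrite mulrC; apply: cvgMr => //.
exact: cvg_inv hs hK hsK habs.
Qed.

Lemma lhs_eq t N : lhs_partial iota theta m.+1 z t N =
  \sum_(h : {ffun 'I_N -> F}) evalA iota (polyOf h) t * sN (polyOf h) N.
Proof.
rewrite /lhs_partial.
set G := fun f : {ffun 'I_m.+1 -> {ffun 'I_N -> F}} =>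
  (\sum_(i < m.+1 | val i == 0%N) evalA iota (polyOf (f i)) t) /
  (\sum_(i < m.+1) evalA iota (polyOf (f i)) theta * z i).
have -> : \sum_(f : {ffun 'I_m.+1 -> {ffun 'I_N -> F}} | f != 0) G f =
    \sum_(f : {ffun 'I_m.+1 -> {ffun 'I_N -> F}}) G f.
  have hG0 : G 0 = 0.
    rewrite /G big1 ?mul0r // => i _.
    by rewrite ffunE polyOf0 evalA0.
  by rewrite [RHS](bigD1 (0 : {ffun 'I_m.+1 -> {ffun 'I_N -> F}})) //= hG0 add0r.
rewrite (@big_fcons _ m _ _ _ G); apply: eq_bigr => h _; rewrite /sN mulr_sumr.
apply: eq_bigr => g _; rewrite /G; congr (_ * _).
  by rewrite big_mkcond big_ord_recl /= fcons0 big1 ?addr0 // => i _.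
congr (_^-1); rewrite big_ord_recl fcons0 /yv; congr (_ + _).
by apply: eq_bigr => j _; rewrite fconsS lift0.
Qed.

Lemma lhs_step t N : abs t <= 1 ->
  abs (lhs_partial iota theta m.+1 z t N.+1 - lhs_partial iota theta m.+1 z t N) <= dd N.
Proof.
move=> ht; rewrite {1}/lhs_partial.
set G := fun M (f : {ffun 'I_m.+1 -> {ffun 'I_M -> F}}) =>
  (\sum_(i < m.+1 | val i == 0%N) evalA iota (polyOf (f i)) t) /
  (\sum_(i < m.+1) evalA iota (polyOf (f i)) theta * z i).
rewrite (@big_box_split F m.+1 _ _ _ N (G N.+1) (fun f => f != 0)) /=.
have -> : \sum_(f : {ffun 'I_m.+1 -> {ffun 'I_N -> F}} | extb f != 0) G N.+1 (extb f) =
    lhs_partial iota theta m.+1 z t N.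
  apply: eq_big => f; first by rewrite extb_eq0.
  by move=> _; rewrite /G; congr (_ / _); apply: eq_bigr => i _; rewrite polyOf_extb.
rewrite addrAC subrr add0r; apply: abs_sum_le => //; first exact: ltW (dd_gt0 N).
move=> f /andP [_ hf]; rewrite /G absM //.
rewrite -[dd N]mul1r; apply: ler_pM; rewrite ?abs_ge0 //.
  by apply: abs_sum_le => // i _; apply: (evalA_le1 iota HA).
by apply: abs_inv_le; apply: outsidef.
Qed.

Lemma rhs_lhs t N pit (E : {poly F} -> C) (sig : {poly F} -> C) :
  abs t <= 1 -> pit != 0 -> (forall a, E a = pit / sig a) ->
  (forall a, cvgC abs (sN a) (sig a)) ->
  abs (rhs_partial iota pit E t N - lhs_partial iota theta m.+1 z t N) <= dd N.
Proof.
move=> ht hp hE hsig.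
have e1 : rhs_partial iota pit E t N =
    \sum_(h : {ffun 'I_N -> F} | h != 0) evalA iota (polyOf h) t * sig (polyOf h).
  rewrite /rhs_partial mulr_sumr; apply: eq_bigr => h _; rewrite hE invf_div.
  by field.
have e2 : lhs_partial iota theta m.+1 z t N =
    \sum_(h : {ffun 'I_N -> F} | h != 0) evalA iota (polyOf h) t * sN (polyOf h) N.
  by rewrite lhs_eq (bigD1 (0 : {ffun 'I_N -> F})) //= polyOf0 evalA0 mul0r add0r.
rewrite e1 e2 -sumrB; apply: abs_sum_le => //; first exact: ltW (dd_gt0 N).
move=> h _; rewrite -mulrBr absM // -[dd N]mul1r; apply: ler_pM; rewrite ?abs_ge0 //.
  exact: (evalA_le1 iota HA).
exact: sN_tail.
Qed.

End Main.

Section Pit.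
Variables (R : realType) (F : finFieldType) (C : closedFieldType).
Variables (abs : C -> R) (theta : C).
Hypothesis HA : abs_axioms abs.
Hypothesis Hth : abs theta = (qF F)%:R.
Hypothesis Hcomp : completeC abs.
Variable xi : C.
Hypothesis hxi : xi != 0.

Let epsi i : C := (theta ^+ (qF F ^ i - 1))^-1.

Lemma theta_neq0 : theta != 0.
Proof.
apply/eqP => e; move: Hth; rewrite e abs0 // => h.
by move: (qR_gt0 R F); rewrite /qR -h ltxx.
Qed.

Lemma abs_epsi i : abs (epsi i) <= (qR R F ^+ i)^-1.
Proof.
rewrite /epsi absV // absX // Hth.
change ((qF F)%:R : R) with (qR R F).
rewrite lef_pV2 ?posrE ?qRX_gt0 //; apply: qRX_le.
have := ltn_expl i (qF_gt1 F); lia.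
Qed.

Lemma abs_epsi_lt1 i : (0 < i)%N -> abs (epsi i) < 1.
Proof.
move=> hi; apply: le_lt_trans (abs_epsi i) _.
rewrite invf_lt1 ?qRX_gt0 //.
by rewrite -(expr0 (qR R F)) ltr_eXn2l // qR_gt1.
Qed.

Lemma abs_1eps i : (0 < i)%N -> abs (1 - epsi i) = 1.
Proof.
move=> hi; rewrite abs_add_dom // ?abs1 // absN //; exact: abs_epsi_lt1.
Qed.

Definition pp N := pi_partial F theta xi N.

Lemma pp_rec N : pp N.+1 = pp N * (1 - epsi N.+1)^-1.
Proof. by rewrite /pp /pi_partial big_nat_recr //= mulrA. Qed.

Lemma abs_pp N : abs (pp N) = abs (theta * xi).
Proof.
elim: N => [|N IH]; first by rewrite /pp /pi_partial big_geq // mulr1.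
by rewrite pp_rec absM // IH absV // abs_1eps // invr1 mulr1.
Qed.

Let cp := qR R F / abs (theta * xi).
Lemma cp_gt0 : 0 < cp.
Proof.
rewrite /cp divr_gt0 ?qR_gt0 // abs_gt0 //.
by rewrite mulf_neq0 // theta_neq0.
Qed.

Lemma pp_step N : abs (pp N.+1 - pp N) <= dd F cp N.
Proof.
have he : 1 - epsi N.+1 != 0.
  by apply/eqP => e; move: (abs_1eps (ltn0Sn N)); rewrite e abs0 // => /esym/eqP; rewrite oner_eq0.
have -> : pp N.+1 - pp N = pp N * (epsi N.+1 / (1 - epsi N.+1)).
  by rewrite pp_rec; field.
rewrite absM // abs_pp (absM HA (epsi N.+1)) (absV HA) abs_1eps // invr1 mulr1.
have -> : dd F cp N = abs (theta * xi) * (qR R F ^+ N.+1)^-1.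
  rewrite /dd /cp mulrAC invf_div exprS //.
rewrite ler_wpM2l ?abs_ge0 //; exact: abs_epsi.
Qed.

Lemma pit_cvg : exists pit, cvgC abs pp pit /\ pit != 0.
Proof.
have hc := cp_gt0.
have [pit hpit] : exists pit, cvgC abs pp pit.
  apply: Hcomp; apply: (cauchy_of_tail HA (d := dd F cp)).
  - exact: pp_step.
  - exact: dd_dec.
  - by move=> eps he; apply: dd_small.
exists pit; split => //.
have hK : 0 < abs (theta * xi) by rewrite abs_gt0 // mulf_neq0 // theta_neq0.
have := cvg_abs_eq HA hpit hK (N0 := 0%N) (fun n _ => abs_pp n).
by move=> h; apply/eqP => e; move: h; rewrite e abs0 // => h0; move: hK; rewrite -h0 ltxx.
Qed.

End Pit.

Unset Implicit Arguments.
Set Strict Implicit.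

Theorem lemma3p8 (R : realType) (F : finFieldType) (C : closedFieldType)
  (abs : C -> R) (iota : {rmorphism F -> C}) (theta : C)
  (HC : is_Cinf abs iota theta)
  (xi : C) (Hxi : xi ^+ (qF F).-1 = - theta)
  (r : nat) (hr : (2 <= r)%N) (z : nat -> C) (Hz : in_Omega abs iota theta r z)
  (t : C) (Ht : abs t <= 1) :
  exists pit : C, cvgC abs (pi_partial F theta xi) pit /\
  exists E : {poly F} -> C,
    (forall a : {poly F}, a != 0 -> cvgC abs (exp_partial iota theta r z pit a) (E a)) /\
  exists S : C,
    cvgC abs (lhs_partial iota theta r z t) S /\
    cvgC abs (rhs_partial iota pit E t) S.
Proof.
case: HC => HA [Hth [Hcomp _]].
case: Hz => Hind _.
case: r hr Hind => [//|m] hr Hind.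
have hxi : xi != 0.
  apply/eqP => e; move: Hxi; rewrite e expr0n.
  have -> : ((qF F).-1 == 0%N) = false.
    by apply/negbTE; rewrite -lt0n -ltnS prednK ?qF_gt1 //; apply: ltnW (qF_gt1 F).
  move/esym/eqP; rewrite oppr_eq0 => /eqP e2.
  by move: (theta_neq0 HA Hth); rewrite e2 eqxx.
have [pit [hpit pit0]] := pit_cvg HA Hth Hcomp hxi.
have [c [hc Hc]] := LBk HA Hth Hcomp Hind (leqnn m.+1).
have HLB : forall b : nat -> {poly F}, forall j, (j < m.+1)%N ->
    c * abs (evalA iota (b j) theta) <= abs (\sum_(i < m.+1) evalA iota (b i) theta * z i).
  move=> b j hj; apply: (Hc (fun i => evalA iota (b i) theta)) => // i _.
  exact: isFt_poly.
have [sig hsig] := choiceT (fun a => sN_cvg HA Hth Hcomp hc HLB a).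
exists pit; split => //.
exists (fun a => pit / sig a); split.
  by move=> a na; have [_ h] := E_cvg HA Hth hc HLB pit0 na (hsig a).
have [S hS] : exists S, cvgC abs (lhs_partial iota theta m.+1 z t) S.
  apply: Hcomp; apply: (cauchy_of_tail HA (d := dd F c)).
  - by move=> k; apply: (lhs_step HA Hth hc HLB).
  - exact: dd_dec.
  - by move=> eps he; apply: dd_small.
exists S; split => //.
move=> eps he.
have [N1 hN1] := dd_small F hc he.
have [N2 hN2] := hS _ he.
exists (maxn N1 N2) => n hn.
have -> : rhs_partial iota pit (fun a => pit / sig a) t n - S =
  (rhs_partial iota pit (fun a => pit / sig a) t n - lhs_partial iota theta m.+1 z t n) +
  (lhs_partial iota theta m.+1 z t n - S) by rewrite addrA subrK.
apply: abs_add_lt => //.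
  apply: le_lt_trans (rhs_lhs HA Hth hc HLB n Ht pit0 (fun a => erefl) hsig) _.
  apply: le_lt_trans hN1; apply: dec_le; first exact: dd_dec.
  exact: leq_trans (leq_maxl _ _) hn.
apply: hN2; exact: leq_trans (leq_maxr _ _) hn.
Qed.
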